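(* There exists a function $\beta:\mathbb{N}\times\mathbb{N}\to\mathbb{N}$ with the following property. Let $G=(A,B,E)$ be a bipartite graph with $A=\{\ell_1,\dots,\ell_m\}$, and let $\mathcal{P}=\{P_1,\dots,P_m\}$ be a partition of $B$ such that (1) for every $i\in[m]$, $P_i\subseteq N_G(\ell_i)$; and (2) for every $i\in[m]$, $N_G(\ell_i)\cap P_j=\emptyset$ for all $j<i$ and $N_G(\ell_i)\cap P_j\neq\emptyset$ for all $j>i$. Suppose further that $m>\beta(a,b)$ for some $a,b\in\mathbb{N}$. Then $G$ contains the half-graph $H_a$ of order $a$ as an induced subgraph, or $G$ contains a $1$-subdivision of $K_b$ as an induced subgraph in which all principal vertices are in $A$.
   Context: $[m]=\{1,\dots,m\}$. The half-graph $H_a$ of order $a$ has vertices $u_1,\dots,u_a,v_1,\dots,v_a$ and edges $u_iv_j$ for $1\le i\le j\le a$. A $1$-subdivision of $K_b$ is obtained from the complete graph $K_b$ by replacing each edge by a path with one internal vertex; the original $b$ vertices are the principal vertices. *)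

(* Defs.v *)
From mathcomp Require Import all_boot.
Set Implicit Arguments. Unset Strict Implicit. Unset Printing Implicit Defensive.

(* A simple graph is given by a finite vertex type and an adjacency relation.
   [induced_in eH eG] : the graph (VH, eH) is isomorphic to an induced
   subgraph of (VG, eG), witnessed by an injective map f. *)
Definition induced_by (VH VG : finType) (eH : rel VH) (eG : rel VG)
  (f : VH -> VG) : Prop :=
  injective f /\ forall x y, eG (f x) (f y) = eH x y.

(* Half-graph H_a: vertices u_1..u_a (inl) and v_1..v_a (inr),
   edges u_i v_j for i <= j (indices shifted to 0..a-1). *)
Definition half_graph (a : nat) : rel ('I_a + 'I_a) :=
  fun x y => match x, y with
  | inl i, inr j => (i <= j)%N
  | inr j, inl i => (i <= j)%N
  | _, _ => false
  end.

(* 1-subdivision of K_b: principal vertices 'I_b (inl), one subdivision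
   vertex for each pair {i,j} with i < j (inr), adjacent to i and j. *)
Definition subdiv_vertex (b : nat) := {p : 'I_b * 'I_b | (p.1 < p.2)%N}.

Definition subdiv_K (b : nat) : rel ('I_b + subdiv_vertex b) :=
  fun x y => match x, y with
  | inl i, inr s => (i == (val s).1) || (i == (val s).2)
  | inr s, inl i => (i == (val s).1) || (i == (val s).2)
  | _, _ => false
  end.

(* Bipartite graph G = (A, B, E) with A = {l_0, ..., l_(m-1)} = 'I_m;
   the vertex set is 'I_m + B and edges join inl i and inr b iff adj i b. *)
Definition bip_graph (m : nat) (B : finType) (adj : 'I_m -> B -> bool)
  : rel ('I_m + B) :=
  fun x y => match x, y with
  | inl i, inr b => adj i b
  | inr b, inl i => adj i b
  | _, _ => false
  end.

Definition is_inA (m : nat) (B : Type) (x : 'I_m + B) : bool :=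
  if x is inl _ then true else false.

Arguments half_graph a : clear implicits.
Arguments subdiv_K b : clear implicits.
Arguments subdiv_vertex b : clear implicits.

(* Main.v *)
Require Import Defs.
From mathcomp Require Import all_boot zify.
Set Implicit Arguments. Unset Strict Implicit. Unset Printing Implicit Defensive.

Definition homog2 (d : nat -> nat -> bool) (col : bool) (T : seq nat) :=
  forall y z, y \in T -> z \in T -> y < z -> d y z = col.
Definition homog3 (c : nat -> nat -> nat -> bool) (col : bool) (T : seq nat) :=
  forall x y z, x \in T -> y \in T -> z \in T -> x < y -> y < z -> c x y z = col.

Lemma sorted_cons_lt x S y : sorted ltn (x :: S) -> y \in S -> x < y.
Proof.
move=> /= H Hy. have := order_path_min ltn_trans H. by move/allP/(_ y Hy).
Qed.

Lemma ramsey2 n : forall d s t S, s + t <= n -> sorted ltn S -> 2 ^ (s + t) <= size S ->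
  exists T, subseq T S /\ ((s <= size T /\ homog2 d true T) \/ (t <= size T /\ homog2 d false T)).
Proof.
elim: n => [|n IH] d s t S Hst Hs Hsz.
  exists [::]; split; first exact: sub0seq.
  left; split; first lia. by [].
case: s Hst Hsz => [|s'] Hst Hsz.
  by exists [::]; split; [exact: sub0seq | left; split].
case: t Hst Hsz => [|t'] Hst Hsz.
  by exists [::]; split; [exact: sub0seq | right; split].
case: S Hs Hsz => [|x S'] Hs Hsz; first by have := expn_gt0 2 (s'.+1 + t'.+1); rewrite /= in Hsz; lia.
have HS' : sorted ltn S' := path_sorted Hs.
have Hc := count_predC (d x) S'.
have E : 2 ^ (s'.+1 + t'.+1) = 2 ^ (s' + t'.+1) + 2 ^ (s'.+1 + t').
  by rewrite addSn expnS addnS mul2n -addnn.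
rewrite E /= in Hsz.
have [Hr|Hb] : 2 ^ (s' + t'.+1) <= count (d x) S' \/ 2 ^ (s'.+1 + t') <= count (predC (d x)) S' by lia.
- have [T [HT H]] := IH d s' t'.+1 _ ltac:(lia) (subseq_sorted ltn_trans (filter_subseq (d x) S') HS')
     ltac:(by rewrite size_filter).
  have HTS : subseq T S' := subseq_trans HT (filter_subseq _ _).
  case: H => [[Hsz2 Hh]|[Hsz2 Hh]].
  + exists (x :: T); split; first by rewrite /= eqxx.
    left; split; first by rewrite /= ltnS.
    move=> y z; rewrite !inE => /orP[/eqP->|Hy] /orP[/eqP->|Hz] Hyz.
    * by rewrite ltnn in Hyz.
    * by have := mem_subseq HT Hz; rewrite mem_filter => /andP[].
    * have := sorted_cons_lt Hs (mem_subseq HTS Hy); lia.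
    * exact: Hh.
  + exists T; split; first exact: subseq_trans HTS (subseq_cons _ _).
    by right.
- have [T [HT H]] := IH d s'.+1 t' _ ltac:(lia) (subseq_sorted ltn_trans (filter_subseq (predC (d x)) S') HS')
     ltac:(by rewrite size_filter).
  have HTS : subseq T S' := subseq_trans HT (filter_subseq _ _).
  case: H => [[Hsz2 Hh]|[Hsz2 Hh]].
  + exists T; split; first exact: subseq_trans HTS (subseq_cons _ _).
    by left.
  + exists (x :: T); split; first by rewrite /= eqxx.
    right; split; first by rewrite /= ltnS.
    move=> y z; rewrite !inE => /orP[/eqP->|Hy] /orP[/eqP->|Hz] Hyz.
    * by rewrite ltnn in Hyz.
    * by have := mem_subseq HT Hz; rewrite mem_filter => /andP[] /= /negbTE.
    * have := sorted_cons_lt Hs (mem_subseq HTS Hy); lia.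
    * exact: Hh.
Qed.

Fixpoint F n := if n is n'.+1 then 2 ^ (F n' + F n') + 1 else 0.

Lemma ramsey3 n : forall c s t S, s + t <= n -> sorted ltn S -> F n <= size S ->
  exists T, subseq T S /\ ((s <= size T /\ homog3 c true T) \/ (t <= size T /\ homog3 c false T)).
Proof.
elim: n => [|n IH] c s t S Hst Hs Hsz.
  exists [::]; split; first exact: sub0seq.
  left; split; first lia. by [].
case: s Hst Hsz => [|s'] Hst Hsz.
  by exists [::]; split; [exact: sub0seq | left; split].
case: t Hst Hsz => [|t'] Hst Hsz.
  by exists [::]; split; [exact: sub0seq | right; split].
case: S Hs Hsz => [|x S'] Hs Hsz; first by rewrite /= addn1 in Hsz.
have HS' : sorted ltn S' := path_sorted Hs.
have HxS : forall y, y \in S' -> x < y := fun y => @sorted_cons_lt x S' y Hs.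
rewrite /= in Hsz.
have [T [HT H]] := @ramsey2 (F n + F n) (c x) (F n) (F n) S' (leqnn _) HS' ltac:(by move: Hsz; rewrite addn1 ltnS).
have HTs : sorted ltn T := subseq_sorted ltn_trans HT HS'.
case: H => [[Hsz2 Hh]|[Hsz2 Hh]].
- have [U [HU H]] := IH c s' t'.+1 T ltac:(lia) HTs Hsz2.
  have HUS : subseq U S' := subseq_trans HU HT.
  case: H => [[Hsz3 Hh3]|[Hsz3 Hh3]].
  + exists (x :: U); split; first by rewrite /= eqxx.
    left; split; first by rewrite /= ltnS.
    move=> y z w; rewrite !inE => /orP[/eqP->|Hy] /orP[/eqP->|Hz] /orP[/eqP->|Hw] Hyz Hzw.
    all: try first [ lia | exact: Hh3 | exact: Hh (mem_subseq HU Hz) (mem_subseq HU Hw) Hzw | (have := HxS _ (mem_subseq HUS Hy); lia) | (have := HxS _ (mem_subseq HUS Hz); lia) | (have := HxS _ (mem_subseq HUS Hw); lia) ].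
  + exists U; split; first exact: subseq_trans HUS (subseq_cons _ _).
    by right.
- have [U [HU H]] := IH c s'.+1 t' T ltac:(lia) HTs Hsz2.
  have HUS : subseq U S' := subseq_trans HU HT.
  case: H => [[Hsz3 Hh3]|[Hsz3 Hh3]].
  + exists U; split; first exact: subseq_trans HUS (subseq_cons _ _).
    by left.
  + exists (x :: U); split; first by rewrite /= eqxx.
    right; split; first by rewrite /= ltnS.
    move=> y z w; rewrite !inE => /orP[/eqP->|Hy] /orP[/eqP->|Hz] /orP[/eqP->|Hw] Hyz Hzw.
    all: try first [ lia | exact: Hh3 | exact: Hh (mem_subseq HU Hz) (mem_subseq HU Hw) Hzw | (have := HxS _ (mem_subseq HUS Hy); lia) | (have := HxS _ (mem_subseq HUS Hz); lia) | (have := HxS _ (mem_subseq HUS Hw); lia) ].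
Qed.

Lemma half_ok m (B : finType) (adj : 'I_m -> B -> bool) a (gu : 'I_a -> 'I_m) (gv : 'I_a -> B) :
  (forall i j, adj (gu i) (gv j) = (i <= j)) ->
  exists f, induced_by (half_graph a) (bip_graph adj) f.
Proof.
move=> H.
exists (fun x => match x with inl i => inl (gu i) | inr j => inr (gv j) end).
split.
- move=> [i|i] [j|j] //= [] E.
  + have Hij : i <= j by rewrite -H E H leqnn.
    have Hji : j <= i by rewrite -H -E H leqnn.
    by congr inl; apply/val_inj/eqP; rewrite eqn_leq Hij Hji.
  + have Hij : i <= j by rewrite -H -E H leqnn.
    have Hji : j <= i by rewrite -H E H leqnn.
    by congr inr; apply/val_inj/eqP; rewrite eqn_leq Hij Hji.
- by move=> [i|i] [j|j] //=; rewrite H.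
Qed.

Lemma subdiv_ok m (B : finType) (adj : 'I_m -> B -> bool) b (gp : 'I_b -> 'I_m)
  (gs : subdiv_vertex b -> B) :
  injective gp ->
  (forall k p, adj (gp k) (gs p) = (k == (val p).1) || (k == (val p).2)) ->
  exists f, induced_by (subdiv_K b) (bip_graph adj) f /\ forall i, is_inA (f (inl i)).
Proof.
move=> Hinj H.
exists (fun x => match x with inl i => inl (gp i) | inr j => inr (gs j) end).
split; last by [].
split.
- move=> [i|i] [j|j] //= [] E.
  + by rewrite (Hinj _ _ E).
  + congr inr.
    case: i E => [[i1 i2] /= Hi] E; case: j E => [[j1 j2] /= Hj] E.
    have := H i1 (exist _ (j1, j2) Hj); rewrite -E H /= eqxx => /esym/orP A1.
    have := H i2 (exist _ (j1, j2) Hj); rewrite -E H /= eqxx orbT => /esym/orP A2.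
    apply: val_inj => /=; clear E.
    case: A1 => /eqP E1; case: A2 => /eqP E2; subst.
    all: try by []. 1-3: exfalso; lia.
- by move=> [i|i] [j|j] //=; rewrite H.
Qed.

Lemma ramsey3c k c S : sorted ltn S -> F (k + k) <= size S ->
  exists T col, subseq T S /\ k <= size T /\ homog3 c col T.
Proof.
move=> Hs Hsz; have [T [HT [[H1 H2]|[H1 H2]]]] := @ramsey3 (k + k) c k k S (leqnn _) Hs Hsz.
- by exists T, true.
- by exists T, false.
Qed.

Lemma homog3_sub c col T U : subseq U T -> homog3 c col T -> homog3 c col U.
Proof. move=> HU H x y z Hx Hy Hz; apply: H; exact: (mem_subseq HU). Qed.

Definition G k := F (k + k).

Theorem lemma4p11 :
  exists beta : nat -> nat -> nat,
  forall (m : nat) (B : finType) (adj : 'I_m -> B -> bool) (P : B -> 'I_m),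
    (forall i : 'I_m, exists v : B, P v = i) ->
    (forall (i : 'I_m) (v : B), P v = i -> adj i v) ->
    (forall (i j : 'I_m) (v : B), (j < i)%N -> P v = j -> ~~ adj i v) ->
    (forall i j : 'I_m, (i < j)%N -> exists v : B, P v = j /\ adj i v) ->
    forall a b : nat, (beta a b < m)%N ->
      (exists f : 'I_a + 'I_a -> 'I_m + B,
          induced_by (half_graph a) (bip_graph adj) f)
      \/
      (exists f : 'I_b + subdiv_vertex b -> 'I_m + B,
          induced_by (subdiv_K b) (bip_graph adj) f /\
          forall i : 'I_b, is_inA (f (inl i))).
Proof.
exists (fun a b => G (G (a + b + 2))).
move=> m B adj P H1 H2 H3 H4 a b Hm.
case: m adj P H1 H2 H3 H4 Hm => [|m'] adj P H1 H2 H3 H4 Hm; first by [].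
have [b0 _] := H1 ord0.
pose A (r : nat) : 'I_m'.+1 := inord r.
pose vv (i j : 'I_m'.+1) : B := odflt b0 [pick v | (P v == j) && adj i v].
have Hvv : forall i j : 'I_m'.+1, i < j -> P (vv i j) = j /\ adj i (vv i j).
  move=> i j lt; rewrite /vv; case: pickP => [v /andP[/eqP -> ->]|Hn] //=.
  have [v [Pv Av]] := H4 i j lt; by move: (Hn v); rewrite Pv eqxx Av.
pose c1 r s t := adj (A r) (vv (A s) (A t)).
pose c2 r s t := adj (A s) (vv (A r) (A t)).
have [T1 [col1 [HT1 [Hsz1 Hh1]]]] := @ramsey3c (G (a + b + 2)) c1 (iota 0 m'.+1)
   (iota_ltn_sorted 0 m'.+1) ltac:(by rewrite size_iota; apply: ltnW).
have [T [col2 [HT [Hsz Hh2]]]] := @ramsey3c (a + b + 2) c2 T1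
   (subseq_sorted ltn_trans HT1 (iota_ltn_sorted 0 _)) Hsz1.
have Hh1' := homog3_sub HT Hh1.
have HTS : subseq T (iota 0 m'.+1) := subseq_trans HT HT1.
have Tsorted : sorted ltn T := subseq_sorted ltn_trans HTS (iota_ltn_sorted 0 _).
pose e i := nth 0 T i.
have He_in : forall i, i < size T -> e i \in T by move=> i Hi; apply: mem_nth.
have He_lt : forall i, i < size T -> e i < m'.+1.
  move=> i Hi; have := mem_subseq HTS (He_in i Hi); rewrite mem_iota; lia.
have He_mono : forall i j, i < j -> j < size T -> e i < e j.
  move=> i j Hij Hj; apply: (sorted_ltn_nth ltn_trans 0 Tsorted) => //.
  exact: ltn_trans Hij Hj.
have HAe : forall i, i < size T -> val (A (e i)) = e i.
  by move=> i Hi; rewrite /A /= inordK // He_lt.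
have HAlt : forall i j, i < size T -> j < size T -> (A (e i) < A (e j)) = (i < j).
  move=> i j Hi Hj; rewrite HAe // HAe //.
  case: (ltngtP i j) => h.
  - by rewrite He_mono.
  - by apply/negbTE; rewrite -leqNgt ltnW // He_mono.
  - by rewrite h ltnn.
have Hadj : forall j t k, j < t -> t < size T -> k < size T ->
    adj (A (e k)) (vv (A (e j)) (A (e t))) =
    if k == j then true else if k == t then true else if t < k then false
    else if k < j then col1 else col2.
  move=> j t k Hjt Ht Hk.
  have Hlt : A (e j) < A (e t) by rewrite HAlt // (ltn_trans Hjt).
  have [HP HA] := Hvv _ _ Hlt.
  case: (eqVneq k j) => [->|nkj]; first by rewrite HA.
  case: (eqVneq k t) => [->|nkt]; first by apply: H2.
  case: ifP => Htk.
    apply/negbTE; apply: (H3 _ _ _ _ HP); by rewrite HAlt.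
  case: ifP => Hkj.
    apply: Hh1'; try apply: He_in; try lia; apply: He_mono; lia.
  apply: Hh2; try apply: He_in; try lia; apply: He_mono; lia.
have HszT : forall k, k < a + b + 2 -> k < size T := fun k h => leq_trans h Hsz.
case: col1 col2 Hadj {Hh1 Hh1' Hh2} => [] [] Hadj.
- left. apply: (@half_ok _ _ _ _ (fun i => A (e i.+1)) (fun j => vv (A (e 0)) (A (e j.+1)))).
  move=> i j; have ? := ltn_ord i; have ? := ltn_ord j; rewrite Hadj; try (apply: HszT); try lia.
  repeat case: ifP => ?; lia.
- left. apply: (@half_ok _ _ _ _ (fun i => A (e i)) (fun j => vv (A (e j)) (A (e a)))).

  move=> i j; have ? := ltn_ord i; have ? := ltn_ord j; rewrite Hadj; try (apply: HszT); try lia.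
  repeat case: ifP => ?; lia.
- left. apply: (@half_ok _ _ _ _ (fun i => A (e (a.-1 - i))) (fun j => vv (A (e (a.-1 - j))) (A (e a)))).
  move=> i j; have ? := ltn_ord i; have ? := ltn_ord j; rewrite Hadj; try (apply: HszT); try lia.
  repeat case: ifP => ?; lia.
- right. apply: (@subdiv_ok _ _ _ _ (fun k => A (e k)) (fun p => vv (A (e (val p).1)) (A (e (val p).2)))).
  + move=> i j; have ? := ltn_ord i; have ? := ltn_ord j; move=> /(congr1 val); rewrite HAe ?HAe; try lia.
    move=> E; apply: val_inj => /=.
    case: (ltngtP i j) => h //.
    * by have := He_mono i j h ltac:(lia); rewrite E ltnn.
    * by have := He_mono j i h ltac:(lia); rewrite E ltnn.
  + move=> k [[p1 p2] /= Hp]; have ? := ltn_ord k; have ? := ltn_ord p1; have ? := ltn_ord p2; rewrite Hadj /=; try (apply: HszT); try lia.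
    rewrite -!(inj_eq val_inj) /=.
    repeat case: ifP => ?; lia.
Qed.
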